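(* Let $n\ge1$, $k\ge2$, and $\mathcal{K}=\{\kappa_0,\dots,\kappa_{k-1}\}$ a set of size $k$. For the uniform prior $\pi$ on $\mathcal{K}^n$ and the single-target gain function $g_{\rm T}$, $$V_{\rm T}[\pi\triangleright\mathbf{S}]=\frac{1}{k^n}\sum_{\substack{n_0,\dots,n_{k-1}\ge0\\ n_0+\dots+n_{k-1}=n}}\binom{n}{n_0,n_1,\dots,n_{k-1}}\frac{\max(n_0,\dots,n_{k-1})}{n}.$$
   Context: A dataset is $x=(x_0,\dots,x_{n-1})\in\mathcal{K}^n$; its histogram $h(x)$ is the map $\kappa\mapsto|\{i:x_i=\kappa\}|$; $\#z$ is the number of datasets with histogram $z$. Shuffle channel $\mathbf{S}:\mathcal{K}^n\to\mathcal{K}^n$: $\mathbf{S}_{x,y}=1/\#h(x)$ if $h(y)=h(x)$, else $0$. Uniform prior $\pi_x=1/k^n$. Single-target gain function: $\mathcal{W}=\mathcal{K}$, $g_{\rm T}(w,x)=1$ if $x_0=w$, else $0$. Posterior vulnerability: $V_{\rm T}[\pi\triangleright\mathbf{C}]=\sum_{y}\max_{w\in\mathcal{W}}\sum_{x}\pi_x\mathbf{C}_{x,y}g_{\rm T}(w,x)$. The sum in the claim ranges over all tuples of nonnegative integers summing to $n$, and $\binom{n}{n_0,\dots,n_{k-1}}$ is the multinomial coefficient. *)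

(* Defs.v *)
From mathcomp Require Import all_boot all_order all_algebra.
Set Implicit Arguments. Unset Strict Implicit. Unset Printing Implicit Defensive.
Import Order.TTheory GRing.Theory Num.Theory.
Local Open Scope ring_scope.

Definition dataset (n k : nat) := (n.-tuple 'I_k)%type.

Definition hist (n k : nat) (x : dataset n k) : {ffun 'I_k -> nat} :=
  [ffun kap => count_mem kap x].

Definition nhist (n k : nat) (z : {ffun 'I_k -> nat}) : nat :=
  #|[set y : dataset n k | hist y == z]|.

Definition shuffle (R : fieldType) (n k : nat) (x y : dataset n k) : R :=
  if hist y == hist x then (nhist n (hist x))%:R^-1 else 0.

Definition uniform_prior (R : fieldType) (n k : nat) (x : dataset n k) : R :=
  ((k ^ n)%N%:R)^-1.

Definition gainT (R : fieldType) (n k : nat) (w : 'I_k) (x : dataset n k) : R :=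
  if ohead x == Some w then 1 else 0.

(* posterior vulnerability
   V[pi |> C] = sum_y max_w sum_x pi_x C_{x,y} g(w,x)
   (max over the finite nonempty set W; all inner sums are >= 0, so the
   fold of Num.max with initial value 0 is the maximum) *)
Definition post_vuln (R : realFieldType) (X Y W : finType)
  (pi : X -> R) (C : X -> Y -> R) (g : W -> X -> R) : R :=
  \sum_(y : Y) \big[Num.max/0]_(w : W) \sum_(x : X) pi x * C x y * g w x.

Definition multinom (n k : nat) (t : 'I_k -> nat) : nat :=
  (n`! %/ \prod_(i < k) (t i)`!)%N.

(* Main.v *)
Require Import Defs.
From mathcomp Require Import all_boot all_order all_algebra.
From mathcomp Require Import ring.
Import Order.TTheory GRing.Theory Num.Theory.
Set Implicit Arguments. Unset Strict Implicit. Unset Printing Implicit Defensive.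

Definition hm n k (y : n.-tuple 'I_k) (z : 'I_k -> nat) : bool :=
  [forall i, count_mem i y == z i].
Definition NN n k (z : 'I_k -> nat) : nat := \sum_(y : n.-tuple 'I_k) hm y z.
Definition dec k (z : 'I_k -> nat) (j : 'I_k) := fun i => (z i - (i == j))%N.

Lemma sum_eq1 k (a : 'I_k) : (\sum_(i < k) (a == i))%N = 1%N.
Proof.
rewrite (bigD1 a) //= eqxx big1 // => i /negbTE; by rewrite eq_sym => ->.
Qed.

Lemma sum_count k (s : seq 'I_k) : (\sum_(i < k) count_mem i s)%N = size s.
Proof.
elim: s => [|a s IH] /=; first by rewrite big1.
by rewrite big_split /= IH sum_eq1 add1n.
Qed.

Lemma hm_cons n k (j : 'I_k) (y : n.-tuple 'I_k) z :
  hm [tuple of j :: y] z = (0 < z j)%N && hm y (dec z j).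
Proof.
rewrite /hm /dec; apply/forallP/andP => [H|[zj /forallP H] i] /=.
  split.
    by have := H j; rewrite /= eqxx add1n => /eqP <-.
  apply/forallP => i; have := H i; rewrite /= => /eqP <-.
  by rewrite [j == i]eq_sym addKn.
have := H i; rewrite /=.
case: (j =P i) => [<-|/eqP ne]; rewrite ?eqxx ?subn1 ?add1n.
  by move/eqP => ->; rewrite prednK.
have ne' : (i == j) = false by rewrite eq_sym (negbTE ne).
by rewrite ?(negbTE ne) ne' subn0 ?add0n.
Qed.

Lemma first_split n k z (j : 'I_k) :
  (\sum_(y : n.+1.-tuple 'I_k) (hm y z && (thead y == j)))%N
  = ((0 < z j) * NN n (dec z j))%N.
Proof.
rewrite (eq_bigr (fun y => if thead y == j then hm y z : nat else 0%N)); last first.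
  by move=> y _; case: (thead y == j); rewrite ?andbT ?andbF.
rewrite -big_mkcond /=.
rewrite (reindex_onto (fun y : n.-tuple 'I_k => [tuple of j :: y])
           (fun y : n.+1.-tuple 'I_k => behead_tuple y)) /=; last first.
  move=> y /eqP hy. apply/val_inj => /=. rewrite -hy. by case: y {hy} => [[|a s]]. 
rewrite /NN big_distrr /=.
apply: eq_big => [y|y _].
  by rewrite /= eqxx /=; apply/eqP; apply/val_inj.
by rewrite hm_cons; case: (0 < z j)%N; rewrite ?mul1n ?mul0n.
Qed.

Lemma NN_S n k z :
  NN n.+1 z = (\sum_(j < k) (0 < z j) * NN n (dec z j))%N.
Proof.
rewrite /NN.
under eq_bigr => y _ do rewrite -[hm y z : nat]muln1 -(sum_eq1 (thead y)) big_distrr /=.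
rewrite exchange_big /=; apply: eq_bigr => j _.
rewrite -first_split; apply: eq_bigr => y _.
by rewrite eq_sym; case: (hm y z); case: (_ == _).
Qed.

Lemma dec_sum k (z : 'I_k -> nat) j n : (0 < z j)%N -> (\sum_(i < k) z i)%N = n.+1 ->
  (\sum_(i < k) dec z j i)%N = n.
Proof.
move=> zj hz.
  move: hz; rewrite (bigD1 j) //= => hz.
  rewrite (bigD1 j) //= /dec eqxx subn1.
  move: hz; rewrite -{1}(prednK zj) addSn => -[<-]; congr (_ + _)%N.
  by apply: eq_bigr => i /negbTE ->; rewrite subn0.
Qed.

Lemma dec_prod k (z : 'I_k -> nat) j : (0 < z j)%N ->
  (\prod_(i < k) (z i)`! = z j * \prod_(i < k) (dec z j i)`!)%N.
Proof.
move=> zj.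
  rewrite (bigD1 j) //= [X in _ = _ * X](bigD1 j) //= /dec eqxx subn1.
  rewrite -{1}(prednK zj) factS prednK // mulnA; congr (_ * _)%N.
  by apply: eq_bigr => i /negbTE ->; rewrite subn0.
Qed.

Lemma NN_fact n k (z : 'I_k -> nat) :
  (\sum_(i < k) z i)%N = n -> (NN n z * \prod_(i < k) (z i)`!)%N = n`!.
Proof.
elim: n z => [|n IH] z hz.
  have z0 : forall i, z i = 0%N.
    by move=> i; apply/eqP; move/eqP: hz; rewrite sum_nat_eq0 => /forallP; apply.
  rewrite big1 ?muln1; last by move=> i _; rewrite z0.
  rewrite /NN (bigD1 [tuple]) //= big1 ?addn0.
    by rewrite /hm; apply/eqP; rewrite eqb1; apply/forallP => i; rewrite z0.
  by move=> y; rewrite (tuple0 y) => /negP; case; apply/eqP.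
rewrite NN_S big_distrl /=.
rewrite (eq_bigr (fun j => z j * n`!)%N).
  by rewrite -big_distrl /= hz factS.
move=> j _; case: (posnP (z j)) => [->|zj] //=.
by rewrite mul1n (dec_prod zj) -(IH _ (dec_sum zj hz)) mulnCA.
Qed.

Lemma prod_fact_gt0 k (z : 'I_k -> nat) : (0 < \prod_(i < k) (z i)`!)%N.
Proof. by apply: prodn_gt0 => i; apply: fact_gt0. Qed.

Lemma NN_pos n k (z : 'I_k -> nat) : (\sum_(i < k) z i)%N = n -> (0 < NN n z)%N.
Proof.
move=> hz; have := NN_fact hz; case: (NN n z) => //= h.
by have := fact_gt0 n; rewrite -h.
Qed.

Lemma first_count m k (z : 'I_k -> nat) w : (\sum_(i < k) z i)%N = m.+1 ->
  (z w * NN m.+1 z = m.+1 * ((0 < z w) * NN m (dec z w)))%N.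
Proof.
move=> hz; case: (posnP (z w)) => [->|zw]; first by rewrite !mul0n muln0.
rewrite mul1n.
have h1 := NN_fact hz; have h2 := NN_fact (dec_sum zw hz).
rewrite (dec_prod zw) in h1.
apply/eqP; rewrite -(eqn_pmul2r (prod_fact_gt0 (dec z w))).
by rewrite -mulnA (mulnCA (z w)) h1 -mulnA h2 factS.
Qed.

Lemma multinom_NN n k (t : 'I_k -> nat) : (\sum_(i < k) t i)%N = n ->
  multinom n t = NN n t.
Proof.
by move=> ht; rewrite /multinom -(NN_fact ht) mulnK // prod_fact_gt0.
Qed.

Lemma sum_max n k :
  (\sum_(y : n.-tuple 'I_k) \max_(i < k) count_mem i y =
  \sum_(t : {ffun 'I_k -> 'I_n.+1} | (\sum_(i < k) (t i : nat)) == n)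
     multinom n (fun i => t i) * \max_(i < k) (t i : nat))%N.
Proof.
pose tof (y : n.-tuple 'I_k) : {ffun 'I_k -> 'I_n.+1} :=
  [ffun i => inord (count_mem i y)].
have tofE : forall y i, (tof y i : nat) = count_mem i y.
  by move=> y i; rewrite ffunE inordK // ltnS -{2}(size_tuple y) count_size.
rewrite (partition_big tof (fun t => (\sum_(i < k) (t i : nat)) == n)) /=; last first.
  by move=> y _; under eq_bigr do rewrite tofE; rewrite sum_count size_tuple.
apply: eq_bigr => t /eqP ht.
rewrite multinom_NN // /NN big_distrl /= big_mkcond; apply: eq_bigr => y _ /=.
have -> : (tof y == t) = hm y (fun i => t i).
  apply/eqP/forallP => [<- i|H]; first by rewrite tofE.
  by apply/ffunP => i; apply/val_inj; rewrite /= tofE; apply/eqP; exact: H.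
case: (boolP (hm _ _)) => h; rewrite ?mul1n ?mul0n //.
by apply: eq_bigr => i _; apply/eqP; exact: (forallP h i).
Qed.

Local Open Scope ring_scope.

Lemma max_scale (R : realFieldType) k (c : R) (f : 'I_k -> nat) : 0 <= c ->
  \big[Num.max/0]_(w < k) (c * (f w)%:R) = c * (\max_(w < k) f w)%N%:R.
Proof.
move=> c0; apply: (big_rec2 (fun a b => a = c * b%:R)); first by rewrite mulr0.
by move=> i y1 y2 _ ->; rewrite -maxr_pMr // -natr_max maxEnat.
Qed.

Lemma ohead_tuple T m (x : m.+1.-tuple T) : ohead x = Some (thead x).
Proof. by case: x => [[|a s]]. Qed.

Lemma hist_eq n k (x y : dataset n k) :
  (hist y == hist x) = hm x (fun i => count_mem i y).
Proof.
apply/eqP/forallP => [H i|H]; first by have := congr1 (fun f : {ffun _ -> nat} => f i) H; rewrite !ffunE => ->.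
by apply/ffunP => i; rewrite !ffunE; apply/esym/eqP/H.
Qed.

Lemma nhist_NN n k (y : dataset n k) :
  nhist n (hist y) = NN n (fun i => count_mem i y).
Proof.
rewrite /nhist /NN -sum1_card big_mkcond /=; apply: eq_bigr => x _.
by rewrite inE eq_sym hist_eq; case: (hm _ _).
Qed.
Local Open Scope ring_scope.

Theorem mainTheorem13 (R : realFieldType) (n k : nat) (hn : (1 <= n)%N) (hk : (2 <= k)%N) :
  post_vuln (@uniform_prior R n k) (@shuffle R n k) (@gainT R n k)
  = ((k ^ n)%N%:R)^-1 *
    \sum_(t : {ffun 'I_k -> 'I_n.+1} | (\sum_(i < k) (t i : nat))%N == n)
       (multinom n (fun i => t i))%:R * ((\max_(i < k) (t i : nat))%N%:R / n%:R).
Proof.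
case: n hn => [|m] // _.
set K : R := ((k ^ m.+1)%N%:R)^-1.
have m1nz : (m.+1)%:R != 0 :> R by rewrite pnatr_eq0.
have step1 : forall (y : dataset m.+1 k) w,
  \sum_(x : dataset m.+1 k) uniform_prior R x * shuffle R x y * gainT R w x
  = K / (m.+1)%:R * (count_mem w y)%:R.
  move=> y w; set cy := fun i => count_mem i y.
  have hs : (\sum_(i < k) cy i)%N = m.+1 by rewrite sum_count size_tuple.
  have NNnz : (NN m.+1 cy)%:R != 0 :> R by rewrite pnatr_eq0 -lt0n (NN_pos hs).
  transitivity (\sum_(x : dataset m.+1 k)
     K * ((NN m.+1 cy)%:R)^-1 * ((hm x cy && (thead x == w)) : nat)%:R).
    apply: eq_bigr => x _.
    rewrite /uniform_prior /shuffle /gainT ohead_tuple /= hist_eq.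
    have -> : (Some (thead x) == Some w) = (thead x == w) by [].
    case: (boolP (hm x cy)) => h /=; last by rewrite !mulr0 ?mul0r.
    have hxy : hist y = hist x by apply/eqP; rewrite hist_eq.
    rewrite -hxy nhist_NN -/cy.
    by case: (thead x == w); rewrite /= ?mulr1 ?mulr0.
  rewrite -mulr_sumr -natr_sum first_split.
  have E : ((0 < cy w)%N * NN m (dec cy w))%N%:R = (cy w)%:R * (NN m.+1 cy)%:R / (m.+1)%:R :> R.
    rewrite -natrM first_count // [X in _ = X / _]natrM; field.
    by rewrite -mulrS.

  rewrite E; field.
  by rewrite -mulrS NNnz m1nz.
have Kge0 : 0 <= K / (m.+1)%:R by rewrite divr_ge0 // invr_ge0 ler0n.
rewrite /post_vuln.
under eq_bigr => y _ do rewrite (eq_bigr _ (fun w _ => step1 y w)) max_scale //.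
rewrite -mulr_sumr -natr_sum sum_max natr_sum !mulr_sumr.
apply: eq_bigr => t _; rewrite natrM; field.
by rewrite -mulrS.
Qed.
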